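(* Let $E,F,L,K:\mathcal I\to\mathbb R^{m\times m}$ be sufficiently smooth, $L,K$ pointwise nonsingular, and $\tilde E=LEK$, $\tilde F=LFK+LEK'$. Let $\tilde{\mathcal E}_{[k]},\tilde{\mathcal F}_{[k]},\tilde S_{[k]}$ be the objects associated with $\{\tilde E,\tilde F\}$. Then for every $k\ge0$ there exist pointwise nonsingular block lower triangular matrix functions $\mathcal L_{[k]},\mathcal K_{[k]}:\mathcal I\to\mathbb R^{(k+1)m\times(k+1)m}$, uniquely determined by $L,K$ and their derivatives, with all diagonal blocks equal to $L$ resp. $K$, such that $\tilde{\mathcal E}_{[k]}=\mathcal L_{[k]}\mathcal E_{[k]}\mathcal K_{[k]}$, $\tilde{\mathcal F}_{[k]}=\mathcal L_{[k]}\mathcal F_{[k]}K+\mathcal L_{[k]}\mathcal E_{[k]}\mathcal H_{[k]}$ with $\mathcal H_{[k]}=[K';K'';\dots;K^{(k+1)}]$, and moreover $\tilde S_{[k]}(t)=K(t)^{-1}S_{[k]}(t)$ and $\tilde S_{[k]}(t)\cap\ker\tilde E(t)=K(t)^{-1}(S_{[k]}(t)\cap\ker E(t))$ for all $t$. In particular $\operatorname{rank}\mathcal E_{[k]}$, $\dim S_{[k]}$ and $\dim(S_{[k]}\cap\ker E)$ are invariant under this transformation.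
   Context: Derivative arrays: for $k\ge0$, $\mathcal E_{[k]}:\mathcal I\to\mathbb R^{(k+1)m\times(k+1)m}$ is the block lower triangular matrix function whose $(i,j)$ block ($0\le j\le i\le k$) is $\binom{i}{j}E^{(i-j)}+\binom{i}{j+1}F^{(i-j-1)}$ (the $F$-term being absent for $j=i$), zero for $j>i$; $\mathcal F_{[k]}=[F;F';\dots;F^{(k)}]$. $S_{[k]}(t)=\{z\in\mathbb R^m:\mathcal F_{[k]}(t)z\in\operatorname{im}\mathcal E_{[k]}(t)\}$. *)

(* Defs.v *)
From HB Require Import structures.
From mathcomp Require Import all_boot all_order all_algebra.
From mathcomp Require Import all_classical all_reals all_analysis.
Set Implicit Arguments. Unset Strict Implicit. Unset Printing Implicit Defensive.
Import Order.TTheory GRing.Theory Num.Theory numFieldNormedType.Exports.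
Local Open Scope ring_scope.
Local Open Scope classical_set_scope.

Section DerivArrays.
Variable R : realType.

Definition mder (m n : nat) (A : R -> 'M[R]_m) (t : R) : 'M[R]_m :=
  \matrix_(i, j) derive1n n (fun s => A s i j) t.

(* entries infinitely differentiable on I ("sufficiently smooth") *)
Definition smooth_on (m : nat) (I : set R) (A : R -> 'M[R]_m) : Prop :=
  forall (n : nat) (i j : 'I_m) (t : R), I t ->
    derivable (derive1n n (fun s => A s i j)) t 1.

(* block indexing of 'I_((k+1) m): index p lies in block row p %/ m,
   at position p %% m inside the block *)
Lemma blk_mod_lt (k m : nat) (p : 'I_(k.+1 * m)) : (p %% m < m)%N.
Proof.
rewrite ltn_mod; case: m p => [|m] [p hp] //=.
by rewrite muln0 in hp.
Qed.

Definition blk (k m : nat) (p : 'I_(k.+1 * m)) : nat := (p %/ m)%N.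
Definition bidx (k m : nat) (p : 'I_(k.+1 * m)) : 'I_m := Ordinal (blk_mod_lt p).

(* derivative array E_[k] : block (i,j) = C(i,j) E^(i-j) + C(i,j+1) F^(i-j-1)
   for j <= i (the F-term vanishes for j = i since C(i,i+1) = 0), 0 for j > i *)
Definition Earr (m : nat) (E F : R -> 'M[R]_m) (k : nat) (t : R)
  : 'M[R]_(k.+1 * m) :=
  \matrix_(p, q)
    if (blk q <= blk p)%N then
      'C(blk p, blk q)%:R * mder (blk p - blk q) E t (bidx p) (bidx q)
      + 'C(blk p, (blk q).+1)%:R * mder (blk p - blk q - 1) F t (bidx p) (bidx q)
    else 0.

Definition Farr (m : nat) (F : R -> 'M[R]_m) (k : nat) (t : R)
  : 'M[R]_(k.+1 * m, m) :=
  \matrix_(p, b) mder (blk p) F t (bidx p) b.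

Definition Harr (m : nat) (K : R -> 'M[R]_m) (k : nat) (t : R)
  : 'M[R]_(k.+1 * m, m) :=
  \matrix_(p, b) mder (blk p).+1 K t (bidx p) b.

Definition Sset (m : nat) (E F : R -> 'M[R]_m) (k : nat) (t : R) : set 'cV[R]_m :=
  [set z | exists y : 'cV[R]_(k.+1 * m), Earr E F k t *m y = Farr F k t *m z].

Definition kerset (m : nat) (A : 'M[R]_m) : set 'cV[R]_m := [set z | A *m z = 0].

Definition invimg (m : nat) (M : 'M[R]_m) (S : set 'cV[R]_m) : set 'cV[R]_m :=
  (fun z => invmx M *m z) @` S.

Definition is_dim (m : nat) (S : set 'cV[R]_m) (d : nat) : Prop :=
  exists B : 'M[R]_(m, d), \rank B = d /\
    (forall z, S z <-> exists c : 'cV[R]_d, z = B *m c).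

Definition blk_lower_diag (m k : nat) (M : 'M[R]_(k.+1 * m)) (D : 'M[R]_m) : Prop :=
  forall p q : 'I_(k.+1 * m),
    ((blk p < blk q)%N -> M p q = 0) /\
    (blk p = blk q -> M p q = D (bidx p) (bidx q)).

End DerivArrays.

(* Main.v *)
Require Import Defs.
From HB Require Import structures.
From mathcomp Require Import all_boot all_order all_algebra.
From mathcomp Require Import all_classical all_reals all_analysis.
From mathcomp Require Import zify ring.
Import Order.TTheory GRing.Theory Num.Theory numFieldNormedType.Exports.
Local Open Scope ring_scope.
Local Open Scope classical_set_scope.

Set Implicit Arguments. Unset Strict Implicit. Unset Printing Implicit Defensive.


Section Scal.
Variable R : realType.
Implicit Types (f g : R -> R) (I : set R).

Definition sm I f := forall n t, I t -> derivable (derive1n n f) t 1.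

Lemma loc I f g t : open I -> (forall u, I u -> f u = g u) -> I t ->
  derive1 f t = derive1 g t /\ (derivable f t 1 -> derivable g t 1).
Proof.
move=> oI fg It.
have nI : \forall u \near t, f u = g u.
  have : nbhs t I by apply: oI.
  by apply: filterS => u /fg.
split; first by rewrite !derive1E; apply: near_eq_derive.
by apply: near_eq_derivable.
Qed.

Lemma dD f g t : derivable f t 1 -> derivable g t 1 ->
  derivable (fun u => f u + g u) t 1 /\
  derive1 (fun u => f u + g u) t = derive1 f t + derive1 g t.
Proof.
move=> df dg; split; first exact: (derivableD df dg).
by rewrite !derive1E (deriveD df dg).
Qed.

Lemma dM f g t : derivable f t 1 -> derivable g t 1 ->
  derivable (fun u => f u * g u) t 1 /\
  derive1 (fun u => f u * g u) t = derive1 f t * g t + f t * derive1 g t.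
Proof.
move=> df dg; split; first exact: (derivableM df dg).
rewrite !derive1E (deriveM df dg) addrC.
by rewrite /GRing.scale /= mulrC [f t * _]mulrC.
Qed.

Lemma dsum n (h : 'I_n -> R -> R) t : (forall i, derivable (h i) t 1) ->
  derivable (fun u => \sum_(i < n) h i u) t 1 /\
  derive1 (fun u => \sum_(i < n) h i u) t = \sum_(i < n) derive1 (h i) t.
Proof.
elim: n h => [|n IH] h dh.
  have -> : (fun u => \sum_(i < 0) h i u) = cst 0.
    by apply/funext => u; rewrite big_ord0.
  by split; [exact: derivable_cst | rewrite derive1_cst big_ord0].
have -> : (fun u => \sum_(i < n.+1) h i u) =
   (fun u => \sum_(i < n) h (widen_ord (leqnSn n) i) u + h ord_max u).
  by apply/funext => u; rewrite big_ord_recr.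
have [d1 e1] := IH (fun i => h (widen_ord (leqnSn n) i)) (fun i => dh _).
have [d2 e2] := dD d1 (dh ord_max).
by split => //; rewrite e2 e1 big_ord_recr.
Qed.

Lemma dMn f t k : derivable f t 1 ->
  derivable (fun u => f u *+ k) t 1 /\
  derive1 (fun u => f u *+ k) t = derive1 f t *+ k.
Proof.
move=> df; elim: k => [|k [d1 e1]].
  have -> : (fun u => f u *+ 0) = cst 0 by apply/funext => u; rewrite mulr0n.
  by split; [exact: derivable_cst | rewrite derive1_cst mulr0n].
have -> : (fun u => f u *+ k.+1) = (fun u => f u + f u *+ k).
  by apply/funext => u; rewrite mulrS.
have [d2 e2] := dD df d1.
by split => //; rewrite e2 e1 mulrS.
Qed.

Lemma smD I f g : open I -> sm I f -> sm I g ->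
  (forall n t, I t -> derive1n n (fun u => f u + g u) t
                      = derive1n n f t + derive1n n g t) /\
  sm I (fun u => f u + g u).
Proof.
move=> oI sf sg.
have eqn : forall n t, I t -> derive1n n (fun u => f u + g u) t
                             = derive1n n f t + derive1n n g t.
  elim=> [//|n IH] t It.
  rewrite !derive1nS.
  have [-> _] := loc (g := fun u => derive1n n f u + derive1n n g u) oI IH It.
  by have [_ ->] := dD (sf n t It) (sg n t It).
split=> // n t It.
have [_ h] := loc (f := fun u => derive1n n f u + derive1n n g u) oI
                  (fun u Iu => esym (eqn n u Iu)) It.
by apply: h; have [] := dD (sf n t It) (sg n t It).
Qed.

End Scal.

Lemma bump0S i : bump 0 i = i.+1. Proof. by []. Qed.

Lemma pascal (V : zmodType) (h : nat -> nat -> V) n :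
  \sum_(c < n.+1) (h (n - c)%N.+1 c + h (n - c)%N c.+1) *+ 'C(n, c)
  = \sum_(c < n.+2) h (n.+1 - c)%N c *+ 'C(n.+1, c).
Proof.
rewrite [RHS]big_ord_recl /= subn0 bin0.
under [in RHS]eq_bigr => i _ do rewrite bump0S subSS binS mulrnDr.
rewrite big_split /= [X in _ = _ + (X + _)]big_ord_recr /= bin_small // mulr0n addr0.
under [in LHS]eq_bigr => i _ do rewrite mulrnDl.
rewrite big_split /= big_ord_recl /= subn0 bin0 -addrA; congr (_ + _).
congr (_ + _); apply: eq_bigr => i _.
by rewrite bump0S subnSK.
Qed.

Section Scal2.
Variable R : realType.
Implicit Types (f g : R -> R) (I : set R).

Lemma smM I f g : open I -> sm I f -> sm I g ->
  (forall n t, I t -> derive1n n (fun u => f u * g u) t =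
     \sum_(c < n.+1) (derive1n (n - c)%N f t * derive1n c g t) *+ 'C(n, c)) /\
  sm I (fun u => f u * g u).
Proof.
move=> oI sf sg.
pose S n u := \sum_(c < n.+1) (derive1n (n - c)%N f u * derive1n c g u) *+ 'C(n, c).
have dS : forall n t, I t -> derivable (S n) t 1 /\ derive1 (S n) t = S n.+1 t.
  move=> n t It.
  pose h (c : 'I_n.+1) u := (derive1n (n - c)%N f u * derive1n c g u) *+ 'C(n, c).
  have dh : forall c : 'I_n.+1, derivable (h c) t 1 /\ derive1 (h c) t =
     (derive1n (n - c)%N.+1 f t * derive1n c g t
      + derive1n (n - c)%N f t * derive1n c.+1 g t) *+ 'C(n, c).
    move=> c; have [d1 e1] := dM (sf (n - c)%N t It) (sg c t It).
    have [d2 e2] := dMn 'C(n, c) d1.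
    by split => //; rewrite /h e2 e1.
  have [d3 e3] := dsum (fun c => (dh c).1).
  split; first exact: d3.
  rewrite /S; rewrite (_ : (fun u => _) = fun u => \sum_(i < n.+1) h i u) // e3.
  under eq_bigr => i _ do rewrite (dh i).2.
  exact: (pascal (fun a b => derive1n a f t * derive1n b g t)).
have eqn : forall n t, I t -> derive1n n (fun u => f u * g u) t = S n t.
  elim=> [|n IH] t It.
    by rewrite /S big_ord1 subn0 bin0 mulr1n.
  rewrite derive1nS.
  have [-> _] := loc oI IH It.
  exact: (dS n t It).2.
split=> // n t It.
have [_ h] := loc oI (fun u Iu => esym (eqn n u Iu)) It.
exact: h (dS n t It).1.
Qed.

End Scal2.

Section Scal3.
Variable R : realType.
Implicit Types (f g : R -> R) (I : set R).

Lemma derive1n_cst0 n : derive1n n (fun _ : R => 0 : R) = (fun _ => 0).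
Proof.
elim: n => [//|n IH]; rewrite derive1nS IH.
by apply/funext => u; rewrite (derive1_cst (0 : R)).
Qed.

Lemma smSum I p (F : 'I_p -> R -> R) : open I -> (forall l, sm I (F l)) ->
  (forall n t, I t -> derive1n n (fun u => \sum_(l < p) F l u) t
                      = \sum_(l < p) derive1n n (F l) t) /\
  sm I (fun u => \sum_(l < p) F l u).
Proof.
move=> oI; elim: p F => [|p IH] F sF.
  have -> : (fun u => \sum_(l < 0) F l u) = (fun _ => 0).
    by apply/funext => u; rewrite big_ord0.
  split=> [n t It|n t It]; first by rewrite derive1n_cst0 big_ord0.
  by rewrite derive1n_cst0; exact: derivable_cst.
have -> : (fun u => \sum_(l < p.+1) F l u) =
   (fun u => \sum_(l < p) F (widen_ord (leqnSn p) l) u + F ord_max u).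
  by apply/funext => u; rewrite big_ord_recr.
have [e1 s1] := IH (fun l => F (widen_ord (leqnSn p) l)) (fun l => sF _).
have [e2 s2] := smD oI s1 (sF ord_max).
split=> // n t It.
by rewrite e2 // e1 // big_ord_recr.
Qed.
End Scal3.

Section Mat.
Variable R : realType.
Variable m : nat.
Implicit Types (A B : R -> 'M[R]_m) (I : set R).

Lemma smooth_sm I A : smooth_on I A -> forall i j, sm I (fun s => A s i j).
Proof. by move=> sA i j n t It; apply: sA. Qed.
Arguments smooth_sm [I A] _ i j.

Lemma sm_smooth I A : (forall i j, sm I (fun s => A s i j)) -> smooth_on I A.
Proof. by move=> sA n i j t It; apply: sA. Qed.

Lemma mderM I A B n t : open I -> smooth_on I A -> smooth_on I B -> I t ->
  mder n (fun s => A s *m B s) t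
  = \sum_(c < n.+1) (mder (n - c)%N A t *m mder c B t) *+ 'C(n, c).
Proof.
move=> oI sA sB It; apply/matrixP => a b; rewrite mxE summxE.
rewrite (_ : (fun s => (A s *m B s) a b) =
             fun s => \sum_(l < m) (fun u => A u a l * B u l b) s); last first.
  by apply/funext => s; rewrite mxE.
have sF : forall l, sm I (fun u => A u a l * B u l b).
  by move=> l; exact: (smM oI (smooth_sm sA a l) (smooth_sm sB l b)).2.
rewrite (smSum oI sF).1 //.
under eq_bigr => l _ do rewrite (smM oI (smooth_sm sA a l) (smooth_sm sB l b)).1 //.

rewrite exchange_big /=; apply: eq_big => // c _.
rewrite mulmxnE mxE.
under [in RHS]eq_bigr => l _ do rewrite !mxE.
by rewrite sumrMnl.
Qed.

Lemma smoothM I A B : open I -> smooth_on I A -> smooth_on I B ->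
  smooth_on I (fun s => A s *m B s).
Proof.
move=> oI sA sB; apply: sm_smooth => a b.
rewrite (_ : (fun s => (A s *m B s) a b) =
             fun s => \sum_(l < m) (fun u => A u a l * B u l b) s); last first.
  by apply/funext => s; rewrite mxE.
apply: (smSum (F := fun l u => A u a l * B u l b) oI _).2 => l.
exact: (smM oI (smooth_sm sA a l) (smooth_sm sB l b)).2.
Qed.

Lemma mderD I A B n t : open I -> smooth_on I A -> smooth_on I B -> I t ->
  mder n (fun s => A s + B s) t = mder n A t + mder n B t.
Proof.
move=> oI sA sB It; apply/matrixP => a b; rewrite !mxE.
rewrite (_ : (fun s => (A s + B s) a b) = fun s => A s a b + B s a b); last first.
  by apply/funext => s; rewrite mxE.
by rewrite (smD oI (smooth_sm sA a b) (smooth_sm sB a b)).1.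
Qed.

Lemma smoothD I A B : open I -> smooth_on I A -> smooth_on I B ->
  smooth_on I (fun s => A s + B s).
Proof.
move=> oI sA sB; apply: sm_smooth => a b.
rewrite (_ : (fun s => (A s + B s) a b) = fun s => A s a b + B s a b); last first.
  by apply/funext => s; rewrite mxE.
exact: (smD oI (smooth_sm sA a b) (smooth_sm sB a b)).2.
Qed.

Lemma mder1S A n t : mder n (mder 1 A) t = mder n.+1 A t.
Proof.
apply/matrixP => a b; rewrite !mxE.
rewrite (_ : (fun s => mder 1 A s a b) = derive1n 1 (fun s => A s a b)); last first.
  by apply/funext => s; rewrite mxE.
by rewrite derive1n1 -derive1Sn.
Qed.

Lemma smooth1 I A : smooth_on I A -> smooth_on I (mder 1 A).
Proof.
move=> sA n a b t It.
rewrite (_ : (fun s => mder 1 A s a b) = derive1n 1 (fun s => A s a b)); last first.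
  by apply/funext => s; rewrite mxE.
by rewrite derive1n1 -derive1Sn; apply: sA.
Qed.

Lemma mder0 A t : mder 0 A t = A t.
Proof. by apply/matrixP => a b; rewrite mxE. Qed.

End Mat.


Lemma binom3 i l a : (a <= l)%N -> (l <= i)%N ->
  ('C(i, l) * 'C(l, a) = 'C(i, a) * 'C(i - a, l - a))%N.
Proof.
move=> al li.
have h1 := bin_fact li. have h2 := bin_fact al.
have h3 := bin_fact (leq_trans al li).
have h4 : (l - a <= i - a)%N by lia.
have h5 := bin_fact h4.
have e : (i - a - (l - a) = i - l)%N by lia.
rewrite e in h5.
have pos : (0 < a`! * (l - a)`! * (i - l)`!)%N by rewrite !muln_gt0 !fact_gt0.
apply/eqP; rewrite -(eqn_pmul2r pos); apply/eqP.
have -> : ('C(i, l) * 'C(l, a) * (a`! * (l - a)`! * (i - l)`!)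
   = 'C(i, l) * ('C(l, a) * (a`! * (l - a)`!)) * (i - l)`!)%N by ring.
rewrite h2.
have -> : ('C(i, a) * 'C(i - a, l - a) * (a`! * (l - a)`! * (i - l)`!)
   = 'C(i, a) * (a`! * ('C(i - a, l - a) * ((l - a)`! * (i - l)`!))))%N by ring.
by rewrite h5 -mulnA h1 h3.
Qed.

Lemma sum_restrict (V : zmodType) N i j (f : nat -> V) :
  (j <= i)%N -> (i < N)%N -> (forall l, (l < j)%N || (i < l)%N -> f l = 0) ->
  \sum_(l < N) f l = \sum_(c < (i - j).+1) f (j + c)%N.
Proof.
move=> ji iN f0.
rewrite -(big_mkord xpredT f) (@big_cat_nat _ _ _ j) //=; last by lia.
rewrite (@big_cat_nat _ _ _ i.+1 j) //=; last by lia.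
rewrite big1_seq; last by move=> l /andP [_]; rewrite mem_index_iota => /andP [_ lj]; apply: f0; rewrite lj.
rewrite [X in _ + (_ + X)]big1_seq; last first.
  by move=> l /andP [_]; rewrite mem_index_iota => /andP [il _]; apply: f0; rewrite il orbT.
rewrite add0r addr0 -{1}(add0n j) big_addn subSn // big_mkord.
by apply: eq_bigr => c _; rewrite addnC.
Qed.


Section Blk.
Variable R : realType.
Variable m : nat.
Implicit Types (A B : R -> 'M[R]_m) (I : set R).

Lemma mulmxnl' (X Y : 'M[R]_m) n : (X *+ n) *m Y = (X *m Y) *+ n.
Proof. by elim: n => [|n IH]; rewrite ?mulr0n ?mul0mx // !mulrS mulmxDl IH. Qed.
Lemma mulmxnr' (X Y : 'M[R]_m) n : X *m (Y *+ n) = (X *m Y) *+ n.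
Proof. by elim: n => [|n IH]; rewrite ?mulr0n ?mulmx0 // !mulrS mulmxDr IH. Qed.

Definition G A (t : R) (i j : nat) : 'M[R]_m :=
  if (j <= i)%N then mder (i - j) A t *+ 'C(i, j) else 0.

Lemma G_gt A t i j : (i < j)%N -> G A t i j = 0.
Proof. by rewrite /G ltnNge => /negbTE ->. Qed.

Lemma GM I A B t i j N : open I -> smooth_on I A -> smooth_on I B -> I t ->
  (i < N)%N ->
  G (fun s => A s *m B s) t i j = \sum_(l < N) G A t i l *m G B t l j.
Proof.
move=> oI sA sB It iN.
case: (leqP j i) => ji; last first.
  rewrite G_gt // big1 // => l _.
  case: (leqP l i) => li; last by rewrite G_gt // mul0mx.
  by rewrite (G_gt B) ?mulmx0 //; apply: leq_trans ji.
rewrite (@sum_restrict _ N i j (fun l => G A t i l *m G B t l j)) //; last first.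
  move=> l /orP [lj|il]; first by rewrite (G_gt B) // mulmx0.
  by rewrite (G_gt A) // mul0mx.
rewrite /G ji (mderM _ oI sA sB It) -sumrMnl.
apply: eq_bigr => c _.
have cle : (c <= i - j)%N by rewrite -ltnS.
rewrite leq_addr (_ : (j + c <= i)%N); last by lia.
rewrite mulmxnl' mulmxnr' -!mulrnA subnDA addKn [in RHS]mulnC.
rewrite (binom3 (leq_addr c j)); last by lia.
by rewrite addKn mulnC.
Qed.

Lemma GKS K t l j : G K t l.+1 j.+1 = G K t l j + G (mder 1 K) t l j.+1.
Proof.
rewrite /G ltnS; case: (leqP j l) => jl; last by rewrite ltnNge (ltnW jl) addr0.
rewrite subSS binS mulrnDr addrC; congr (_ + _).
case: (ltnP j l) => jl'.
  by rewrite mder1S subnSK.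
have -> : j = l by apply/eqP; rewrite eqn_leq jl jl'.
by rewrite bin_small // mulr0n.
Qed.


Lemma blk_lt k (p : 'I_(k.+1 * m)) : (blk p < k.+1)%N.
Proof.
rewrite /blk; case: m p => [|m'] [p hp] /=; first by rewrite muln0 in hp.
by rewrite ltn_divLR.
Qed.

Lemma pidx_lt k (l : 'I_k.+1) (b : 'I_m) : (l * m + b < k.+1 * m)%N.
Proof.
have hb := ltn_ord b; have hl := ltn_ord l.
have : (l.+1 * m <= k.+1 * m)%N by rewrite leq_mul2r hl orbT.
rewrite mulSn; lia.
Qed.

Definition pidx k (l : 'I_k.+1) (b : 'I_m) : 'I_(k.+1 * m) := Ordinal (pidx_lt l b).

Lemma blk_pidx k l b : blk (@pidx k l b) = l.
Proof.
rewrite /blk /=; have hb := ltn_ord b.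
by rewrite divnMDl ?divn_small ?addn0 //; lia.
Qed.

Lemma bidx_pidx k l b : bidx (@pidx k l b) = b.
Proof. by apply: val_inj; rewrite /= modnMDl modn_small. Qed.

Lemma sum_blk (V : zmodType) k (F : 'I_(k.+1 * m) -> V) :
  \sum_p F p = \sum_(l < k.+1) \sum_(b < m) F (pidx l b).
Proof.
rewrite pair_big /=.
apply: (reindex (fun pr : 'I_k.+1 * 'I_m => pidx pr.1 pr.2)).
apply: onW_bij.
exists (fun p => (Ordinal (blk_lt p), bidx p)).
  by move=> [l b] /=; congr (_, _); [apply: val_inj; rewrite /= blk_pidx | rewrite bidx_pidx].
move=> p; apply: val_inj => /=.
by rewrite /blk -divn_eq.
Qed.

Definition bmx k (M : nat -> nat -> 'M[R]_m) : 'M[R]_(k.+1 * m) :=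
  \matrix_(p, q) M (blk p) (blk q) (bidx p) (bidx q).
Definition bcol k (V : nat -> 'M[R]_m) : 'M[R]_(k.+1 * m, m) :=
  \matrix_(p, b) V (blk p) (bidx p) b.

Lemma bmxM k M1 M2 : bmx k M1 *m bmx k M2 =
  bmx k (fun i j => \sum_(l < k.+1) M1 i l *m M2 l j).
Proof.
apply/matrixP => p q; rewrite !mxE sum_blk summxE; apply: eq_bigr => l _.
rewrite mxE; apply: eq_bigr => b _.
by rewrite !mxE blk_pidx bidx_pidx.
Qed.

Lemma bmxMc k M V : bmx k M *m bcol k V =
  bcol k (fun i => \sum_(l < k.+1) M i l *m V l).
Proof.
apply/matrixP => p q; rewrite !mxE sum_blk summxE; apply: eq_bigr => l _.
rewrite mxE; apply: eq_bigr => b _.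
by rewrite !mxE blk_pidx bidx_pidx.
Qed.

Lemma bcolM k V (X : 'M[R]_m) : bcol k V *m X = bcol k (fun i => V i *m X).
Proof. by apply/matrixP => p q; rewrite !mxE; apply: eq_bigr => b _; rewrite !mxE. Qed.

Lemma bmxD k M1 M2 : bmx k M1 + bmx k M2 = bmx k (fun i j => M1 i j + M2 i j).
Proof. by apply/matrixP => p q; rewrite !mxE. Qed.

Lemma bcolD k V1 V2 : bcol k V1 + bcol k V2 = bcol k (fun i => V1 i + V2 i).
Proof. by apply/matrixP => p q; rewrite !mxE. Qed.

Lemma bmx_ext k M1 M2 : (forall i j, (i < k.+1)%N -> (j < k.+1)%N -> M1 i j = M2 i j) ->
  bmx k M1 = bmx k M2.
Proof. by move=> h; apply/matrixP => p q; rewrite !mxE h // blk_lt. Qed.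

Lemma bcol_ext k V1 V2 : (forall i, (i < k.+1)%N -> V1 i = V2 i) -> bcol k V1 = bcol k V2.
Proof. by move=> h; apply/matrixP => p q; rewrite !mxE h // blk_lt. Qed.

End Blk.


Section Blk2.
Variable R : realType.
Variable m : nat.
Implicit Types (A B E F K L : R -> 'M[R]_m) (I : set R).

Lemma pidx_blk k (p : 'I_(k.+1 * m)) : p = pidx (Ordinal (blk_lt p)) (bidx p).
Proof. by apply: val_inj => /=; rewrite /blk -divn_eq. Qed.

Lemma Earr_bmx E F k t :
  Earr E F k t = bmx k (fun i j => G E t i j + G F t i j.+1).
Proof.
apply/matrixP => p q; rewrite !mxE /G.
case: (leqP (blk q) (blk p)) => h.
  case: (ltnP (blk q) (blk p)) => h2.
    by rewrite !mulmxnE !mxE !mulr_natl !subnS subn0.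
  have e : blk q = blk p by apply/eqP; rewrite eqn_leq h h2.
  by rewrite e (bin_small (ltnSn _)) mul0r addr0 mulmxnE mxE mulr_natl !mxE addr0.
rewrite ltnNge (ltnW h) /= !mxE; exact/esym/addr0.
Qed.

Lemma Farr_bcol F k t : Farr F k t = bcol k (fun i => G F t i 0).
Proof. by apply/matrixP => p q; rewrite !mxE /G leq0n subn0 bin0 mulr1n /mder mxE. Qed.

Lemma Harr_bcol K k t : Harr K k t = bcol k (fun i => G (mder 1 K) t i 0).
Proof.
by apply/matrixP => p q; rewrite !mxE /G leq0n subn0 bin0 mulr1n mder1S /mder mxE.
Qed.

Lemma bmx_lower k (H : nat -> nat -> 'M[R]_m) (D : 'M[R]_m) :
  (forall i j, (i < j)%N -> H i j = 0) -> (forall i, H i i = D) ->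
  blk_lower_diag (bmx k H) D.
Proof.
move=> h0 h1 p q; split => [lt|eq]; rewrite mxE; first by rewrite h0 // mxE.
by rewrite eq h1.
Qed.

Lemma blk_unit k (M : 'M[R]_(k.+1 * m)) D : D \in unitmx -> blk_lower_diag M D ->
  M \in unitmx.
Proof.
move=> uD hM; rewrite -row_free_unit -kermx_eq0 -submx0.
apply/rV_subP => u /sub_kermxP uM; rewrite submx0; apply/eqP.
pose Z (l : 'I_k.+1) := forall b, u 0 (pidx l b) = 0.
have key : forall d (l : 'I_k.+1), (k - l < d)%N -> Z l.
  elim=> [//|d IH] l hl b.
  pose w := \row_a u 0 (pidx l a).
  have wD : w *m D = 0.
    apply/rowP => b'; rewrite !mxE.
    have h := congr1 (fun X : 'rV[R]_(k.+1 * m) => X 0 (pidx l b')) uM.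
    rewrite /= !mxE sum_blk in h.
    rewrite -[X in _ = X]h (bigD1 l) //= [X in _ + X]big1 ?addr0; last first.
      move=> l' nl'; apply: big1 => a _.
      case: (ltnP l' l) => hl'.
        by rewrite (proj1 (hM _ _)) ?mulr0 // !blk_pidx.
      have lt : (l < l')%N by rewrite ltn_neqAle hl' andbT eq_sym.
      rewrite IH ?mul0r //.
      have := ltn_ord l'; lia.
    by apply: eq_bigr => a _; rewrite (proj2 (hM _ _)) ?blk_pidx // !bidx_pidx mxE.
  have : w = 0 by rewrite -(mulmxK uD w) wD mul0mx.
  by move/rowP/(_ b); rewrite !mxE.
apply/rowP => r; rewrite mxE (pidx_blk r).
apply: (key k.+1); have := ltn_ord (Ordinal (blk_lt r)); lia.
Qed.

End Blk2.


Section Sets.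
Variable R : realType.
Variable m : nat.

Lemma unit_cancel n p (A : 'M[R]_n) (X Y : 'M[R]_(n, p)) :
  A \in unitmx -> A *m X = A *m Y -> X = Y.
Proof. by move=> uA h; rewrite -(mulKmx uA X) h mulKmx. Qed.

Lemma S_transf n (Ea Et : 'M[R]_n) (Fa Ft H : 'M[R]_(n, m)) (Lk Kk : 'M[R]_n)
  (K : 'M[R]_m) :
  Lk \in unitmx -> Kk \in unitmx -> K \in unitmx ->
  Et = Lk *m Ea *m Kk -> Ft = Lk *m Fa *m K + Lk *m Ea *m H ->
  [set z | exists y, Et *m y = Ft *m z] =
  invimg K [set z | exists y, Ea *m y = Fa *m z].
Proof.
move=> uL uKk uK -> ->; apply/seteqP; split.
  move=> z [y hy]; exists (K *m z); last by rewrite mulKmx.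
  exists (Kk *m y - H *m z).
  have hy2 : Ea *m (Kk *m y) = Fa *m (K *m z) + Ea *m (H *m z).
    apply: (unit_cancel uL); rewrite mulmxDr !mulmxA hy mulmxDl.
    by rewrite ?mulmxA.
  by rewrite mulmxBr hy2 addrK.
move=> _ [w [y hy] <-].
exists (invmx Kk *m (y + H *m (invmx K *m w))).
rewrite mulmxDl -!mulmxA (mulKVmx uKk) (mulKVmx uK) !mulmxDr hy.
by [].
Qed.

Lemma invimg_ker (S : set 'cV[R]_m) (L E K : 'M[R]_m) :
  L \in unitmx -> K \in unitmx ->
  invimg K S `&` kerset (L *m E *m K) = invimg K (S `&` kerset E).
Proof.
move=> uL uK; apply/seteqP; split.
  move=> _ [[w Sw <-]]; rewrite /kerset /= -!mulmxA mulKVmx // => h.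
  exists w => //; split => //=.
  by have := congr1 (mulmx (invmx L)) h; rewrite mulKmx // mulmx0.
move=> _ [w [Sw hw] <-]; split; first by exists w.
by rewrite /kerset /= -!mulmxA mulKVmx // hw mulmx0.
Qed.

Lemma rank_unitl p q (A : 'M[R]_p) (B : 'M[R]_(p, q)) :
  A \in unitmx -> \rank (A *m B) = \rank B.
Proof.
move=> uA; rewrite -mxrank_tr trmx_mul mxrankMfree ?mxrank_tr //.
by rewrite row_free_unit unitmx_tr.
Qed.

Lemma rank_unit2 n (A B C : 'M[R]_n) :
  A \in unitmx -> C \in unitmx -> \rank (A *m B *m C) = \rank B.
Proof.
by move=> uA uC; rewrite mxrankMfree ?row_free_unit // rank_unitl.
Qed.

Lemma is_dim_invimg (M : 'M[R]_m) S d : M \in unitmx -> is_dim S d ->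
  is_dim (invimg M S) d.
Proof.
move=> uM [B [rB hB]]; exists (invmx M *m B); split.
  by rewrite rank_unitl // unitmx_inv.
move=> z; split.
  move=> [w /hB [c ->] <-]; exists c; by rewrite mulmxA.
move=> [c ->]; exists (B *m c); first by apply/hB; exists c.
by rewrite mulmxA.
Qed.

Lemma invimgK (M : 'M[R]_m) S : M \in unitmx -> invimg (invmx M) (invimg M S) = S.
Proof.
move=> uM; apply/seteqP; split.
  by move=> _ [_ [w Sw <-] <-]; rewrite invmxK mulKVmx.
move=> w Sw; exists (invmx M *m w); first by exists w.
by rewrite invmxK mulKVmx.
Qed.

Lemma is_dim_invimgE (M : 'M[R]_m) S d : M \in unitmx ->
  is_dim (invimg M S) d <-> is_dim S d.
Proof.
move=> uM; split; last exact: is_dim_invimg.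
move=> h; rewrite -(invimgK S uM); apply: is_dim_invimg => //.
by rewrite unitmx_inv.
Qed.

End Sets.


Section Main.
Variable R : realType.
Variable m : nat.
Implicit Types (A B E F K L : R -> 'M[R]_m) (I : set R).

Lemma GD I A B t i j : open I -> smooth_on I A -> smooth_on I B -> I t ->
  G (fun s => A s + B s) t i j = G A t i j + G B t i j.
Proof.
move=> oI sA sB It; rewrite /G; case: ifP => _; last by rewrite addr0.
by rewrite (mderD _ oI sA sB It) mulrnDl.
Qed.

Lemma Gdiag A t i : G A t i i = A t.
Proof. by rewrite /G leqnn subnn binn mulr1n mder0. Qed.

Lemma G0S K t l : G K t l.+1 0 = G (mder 1 K) t l 0.
Proof. by rewrite /G !leq0n !subn0 !bin0 mder1S. Qed.

Lemma stepL I L X k t : open I -> smooth_on I L -> smooth_on I X -> I t ->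
  forall Y, smooth_on I Y ->
  Earr (fun s => L s *m X s) (fun s => L s *m Y s) k t
  = bmx k (G L t) *m Earr X Y k t.
Proof.
move=> oI sL sX It Y sY.
rewrite !Earr_bmx bmxM; apply: bmx_ext => i j hi hj.
rewrite (GM j oI sL sX It hi) (GM j.+1 oI sL sY It hi) -big_split /=.
by apply: eq_bigr => l _; rewrite mulmxDr.
Qed.


Lemma stepK I E F K k t : open I -> smooth_on I E -> smooth_on I F ->
  smooth_on I K -> I t ->
  Earr (fun s => E s *m K s) (fun s => F s *m K s + E s *m mder 1 K s) k t
  = Earr E F k t *m bmx k (fun i j => G K t i.+1 j.+1).
Proof.
move=> oI sE sF sK It; have sK1 := smooth1 sK.
rewrite !Earr_bmx bmxM; apply: bmx_ext => i j hi hj.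
rewrite (GD _ _ oI (smoothM oI sF sK) (smoothM oI sE sK1) It).
rewrite (GM j oI sE sK It hi) (GM j.+1 oI sE sK1 It hi).
rewrite (GM (N := k.+2) j.+1 oI sF sK It (ltnW hi : (i < k.+2)%N)).
rewrite [\sum_(l < k.+2) _]big_ord_recl /=.
rewrite (G_gt K t (ltn0Sn j)) mulmx0 add0r.
under [in RHS]eq_bigr => l _ do rewrite mulmxDl {1}GKS mulmxDr.
by rewrite !big_split /= -addrA; congr (_ + _); rewrite addrC; congr (_ + _).
Qed.


Lemma stepFL I L Y k t : open I -> smooth_on I L -> smooth_on I Y -> I t ->
  Farr (fun s => L s *m Y s) k t = bmx k (G L t) *m Farr Y k t.
Proof.
move=> oI sL sY It; rewrite !Farr_bcol bmxMc; apply: bcol_ext => i hi.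
exact: (GM 0 oI sL sY It hi).
Qed.

Lemma stepFK I E F K k t : open I -> smooth_on I E -> smooth_on I F ->
  smooth_on I K -> I t ->
  Farr (fun s => F s *m K s + E s *m mder 1 K s) k t
  = Farr F k t *m K t + Earr E F k t *m Harr K k t.
Proof.
move=> oI sE sF sK It; have sK1 := smooth1 sK.
rewrite Farr_bcol [Farr F k t]Farr_bcol Harr_bcol Earr_bmx bcolM bmxMc bcolD.
apply: bcol_ext => i hi.
rewrite (GD _ _ oI (smoothM oI sF sK) (smoothM oI sE sK1) It).
rewrite (GM (N := k.+2) 0 oI sF sK It (ltnW hi : (i < k.+2)%N)).
rewrite (GM 0 oI sE sK1 It hi) [\sum_(l < k.+2) _]big_ord_recl /= Gdiag.
under [in RHS]eq_bigr => l _ do rewrite mulmxDl.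
rewrite big_split /= -!addrA; congr (_ + _); rewrite addrC; congr (_ + _).
by apply: eq_bigr => l _; rewrite bump0S G0S.
Qed.

End Main.

Unset Implicit Arguments. Set Strict Implicit.

Theorem propositionp (R : realType) (m : nat) (I : set R) (L K : R -> 'M[R]_m) :
  open I ->
  smooth_on I L -> smooth_on I K ->
  (forall t, I t -> L t \in unitmx) ->
  (forall t, I t -> K t \in unitmx) ->
  forall k : nat,
  exists Lk Kk : R -> 'M[R]_(k.+1 * m),
    (forall t, I t ->
       [/\ Lk t \in unitmx, Kk t \in unitmx,
           blk_lower_diag (Lk t) (L t) & blk_lower_diag (Kk t) (K t)]) /\
    forall E F : R -> 'M[R]_m,
      smooth_on I E -> smooth_on I F ->
      let Et := fun t => L t *m E t *m K t in
      let Ft := fun t => L t *m F t *m K t + L t *m E t *m mder 1 K t in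
      forall t, I t ->
        [/\ Earr Et Ft k t = Lk t *m Earr E F k t *m Kk t,
            Farr Ft k t = Lk t *m Farr F k t *m K t
                          + Lk t *m Earr E F k t *m Harr K k t,
            Sset Et Ft k t = invimg (K t) (Sset E F k t),
            Sset Et Ft k t `&` kerset (Et t)
              = invimg (K t) (Sset E F k t `&` kerset (E t))
          & [/\ \rank (Earr Et Ft k t) = \rank (Earr E F k t),
                (forall d, is_dim (Sset Et Ft k t) d <-> is_dim (Sset E F k t) d)
              & (forall d, is_dim (Sset Et Ft k t `&` kerset (Et t)) d
                           <-> is_dim (Sset E F k t `&` kerset (E t)) d)]].
Proof.
move=> oI sL sK uL uK k.
exists (fun t => bmx k (G L t)), (fun t => bmx k (fun i j => G K t i.+1 j.+1)).
have dL : forall t, blk_lower_diag (bmx k (G L t)) (L t).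
  move=> t; apply: bmx_lower => [i j ij|i]; [exact: G_gt | exact: Gdiag].
have dK : forall t, blk_lower_diag (bmx k (fun i j => G K t i.+1 j.+1)) (K t).
  move=> t; apply: bmx_lower => [i j ij|i]; [exact: G_gt | exact: Gdiag].
split.
  move=> t It; split => //.
    exact: blk_unit (uL t It) (dL t).
  exact: blk_unit (uK t It) (dK t).
move=> E F sE sF Et Ft t It.
set Lk := bmx k (G L t); set Kk := bmx k (fun i j => G K t i.+1 j.+1).
have uLk : Lk \in unitmx := blk_unit (uL t It) (dL t).
have uKk : Kk \in unitmx := blk_unit (uK t It) (dK t).
have sK1 := smooth1 sK.
pose E1 := fun s => E s *m K s.
pose F1 := fun s => F s *m K s + E s *m mder 1 K s.
have sE1 : smooth_on I E1 := smoothM oI sE sK.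
have sF1 : smooth_on I F1 := smoothD oI (smoothM oI sF sK) (smoothM oI sE sK1).
have eEt : Et = fun s => L s *m E1 s.
  by apply/funext => s; rewrite /Et /E1 mulmxA.
have eFt : Ft = fun s => L s *m F1 s.
  by apply/funext => s; rewrite /Ft /F1 mulmxDr !mulmxA.
have hE : Earr Et Ft k t = Lk *m Earr E F k t *m Kk.
  rewrite eEt eFt (stepL k oI sL sE1 It sF1) /E1 /F1 (stepK k oI sE sF sK It).
  by rewrite mulmxA.
have hF : Farr Ft k t = Lk *m Farr F k t *m K t + Lk *m Earr E F k t *m Harr K k t.
  rewrite eFt (stepFL k oI sL sF1 It) /F1 (stepFK k oI sE sF sK It).
  by rewrite mulmxDr !mulmxA.
have hS : Sset Et Ft k t = invimg (K t) (Sset E F k t).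
  by rewrite /Sset; exact: (S_transf uLk uKk (uK t It) hE hF).
have hSK : Sset Et Ft k t `&` kerset (Et t)
            = invimg (K t) (Sset E F k t `&` kerset (E t)).
  by rewrite hS /Et; exact: (invimg_ker _ _ (uL t It) (uK t It)).
split => //; split.
- by rewrite hE rank_unit2.
- by move=> d; rewrite hS; exact: (is_dim_invimgE _ _ (uK t It)).
- by move=> d; rewrite hSK; exact: (is_dim_invimgE _ _ (uK t It)).
Qed.
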